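(* Let $\mathcal{A}\in\mathbb{R}^{n\times n\times n}$ and $\mathcal{E}\in\mathbb{R}^{n\times n\times n}$ be such that $\mathcal{A}$ and $\tilde{\mathcal{A}}=\mathcal{A}+\mathcal{E}$ are piezoelectric-type tensors. Then $$\sqrt{(\lambda_{C\max}(\mathcal{A}))^2+\lambda_{Z\min}(\mathcal{S}_{\tilde{\mathcal{A}}}-\mathcal{S}_{\mathcal{A}})}\ \le\ \lambda_{C\max}(\tilde{\mathcal{A}})\ \le\ \sqrt{(\lambda_{C\max}(\mathcal{A}))^2+\lambda_{Z\max}(\mathcal{S}_{\tilde{\mathcal{A}}}-\mathcal{S}_{\mathcal{A}})}.$$ (In particular both quantities under the square roots are nonnegative.)
   Context: A tensor $\mathcal{A}=(a_{ijk})\in\mathbb{R}^{n\times n\times n}$ is piezoelectric-type if $a_{ijk}=a_{ikj}$ for all $i,j,k$. For such $\mathcal{A}$, $\lambda_{C\max}(\mathcal{A})=\max\{\sum_{i,j,k}a_{ijk}x_iy_jy_k:\ \mathbf{x},\mathbf{y}\in\mathbb{R}^n,\ \mathbf{x}^T\mathbf{x}=\mathbf{y}^T\mathbf{y}=1\}$ is its largest $C$-eigenvalue (a $C$-eigenvalue being a real $\lambda$ with unit $\mathbf{x},\mathbf{y}$ satisfying $\sum_{j,k}a_{ijk}y_jy_k=\lambda x_i$ and $\sum_{j,k}a_{jki}x_jy_k=\lambda y_i$ for all $i$). The symmetric fourth-order tensor $\mathcal{S}_{\mathcal{A}}=(\bar b_{i_1i_2i_3i_4})$ is defined by $\bar b_{i_1i_2i_3i_4}=\frac13(b_{i_1i_2i_3i_4}+b_{i_1i_3i_2i_4}+b_{i_1i_4i_2i_3})$,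 where $b_{i_1i_2i_3i_4}=\sum_{i=1}^n a_{ii_1i_2}a_{ii_3i_4}$. For a symmetric fourth-order tensor $\mathcal{T}=(t_{i_1i_2i_3i_4})$, a $Z$-eigenvalue is a real $\lambda$ with some $\mathbf{x}\in\mathbb{R}^n$, $\mathbf{x}^T\mathbf{x}=1$, such that $\sum_{i_2,i_3,i_4}t_{ii_2i_3i_4}x_{i_2}x_{i_3}x_{i_4}=\lambda x_i$ for all $i$; $\lambda_{Z\max}(\mathcal{T})$ and $\lambda_{Z\min}(\mathcal{T})$ denote the largest and smallest $Z$-eigenvalues, which equal respectively the maximum and minimum of $\mathcal{T}\mathbf{x}^4=\sum t_{i_1i_2i_3i_4}x_{i_1}x_{i_2}x_{i_3}x_{i_4}$ over unit vectors $\mathbf{x}\in\mathbb{R}^n$. *)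

(* Defs.v *)
From HB Require Import structures.
From mathcomp Require Import all_boot all_order all_algebra.
From mathcomp Require Import reals.
Set Implicit Arguments. Unset Strict Implicit. Unset Printing Implicit Defensive.
Import Order.TTheory GRing.Theory Num.Theory.
Local Open Scope ring_scope.

Definition tensor3 (R : realType) (n : nat) := 'I_n -> 'I_n -> 'I_n -> R.
Definition tensor4 (R : realType) (n : nat) := 'I_n -> 'I_n -> 'I_n -> 'I_n -> R.

Definition unit_vec (R : realType) (n : nat) (x : 'I_n -> R) : Prop :=
  \sum_(i < n) x i ^+ 2 = 1.

Definition piezo_type (R : realType) (n : nat) (A : tensor3 R n) : Prop :=
  forall i j k, A i j k = A i k j.

Definition C_eigenvalue (R : realType) (n : nat) (A : tensor3 R n) (l : R) : Prop :=
  exists x y : 'I_n -> R, unit_vec x /\ unit_vec y /\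
    (forall i, \sum_(j < n) \sum_(k < n) A i j k * y j * y k = l * x i) /\
    (forall i, \sum_(j < n) \sum_(k < n) A j k i * x j * y k = l * y i).

Definition is_lambda_Cmax (R : realType) (n : nat) (A : tensor3 R n) (l : R) : Prop :=
  C_eigenvalue A l /\ forall l', C_eigenvalue A l' -> l' <= l.

Definition B_of (R : realType) (n : nat) (A : tensor3 R n) : tensor4 R n :=
  fun i1 i2 i3 i4 => \sum_(i < n) A i i1 i2 * A i i3 i4.

Definition S_of (R : realType) (n : nat) (A : tensor3 R n) : tensor4 R n :=
  fun i1 i2 i3 i4 =>
    3^-1 * (B_of A i1 i2 i3 i4 + B_of A i1 i3 i2 i4 + B_of A i1 i4 i2 i3).

Definition sub4 (R : realType) (n : nat) (T U : tensor4 R n) : tensor4 R n :=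
  fun i1 i2 i3 i4 => T i1 i2 i3 i4 - U i1 i2 i3 i4.

Definition add3 (R : realType) (n : nat) (A E : tensor3 R n) : tensor3 R n :=
  fun i j k => A i j k + E i j k.

Definition Z_eigenvalue (R : realType) (n : nat) (T : tensor4 R n) (l : R) : Prop :=
  exists x : 'I_n -> R, unit_vec x /\
    forall i, \sum_(i2 < n) \sum_(i3 < n) \sum_(i4 < n)
                T i i2 i3 i4 * x i2 * x i3 * x i4 = l * x i.

Definition is_lambda_Zmax (R : realType) (n : nat) (T : tensor4 R n) (l : R) : Prop :=
  Z_eigenvalue T l /\ forall l', Z_eigenvalue T l' -> l' <= l.

Definition is_lambda_Zmin (R : realType) (n : nat) (T : tensor4 R n) (l : R) : Prop :=
  Z_eigenvalue T l /\ forall l', Z_eigenvalue T l' -> l <= l'.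

(* Main.v *)
Require Import Defs.
From HB Require Import structures.
From mathcomp Require Import all_boot all_order all_algebra.
From mathcomp Require Import all_classical all_reals all_analysis.
From mathcomp Require Import ring lra.
Import Order.TTheory GRing.Theory Num.Theory.
Import numFieldNormedType.Exports.
Local Open Scope classical_set_scope.
Local Open Scope ring_scope.

Set Implicit Arguments. Unset Strict Implicit.
Section S.
Variable R : realType.

Lemma cont_sum (n : nat) (I : Type) (s : seq I) (F : I -> 'rV[R]_n -> R) :
  (forall i, continuous (F i)) -> continuous (fun v => \sum_(i <- s) F i v).
Proof.
move=> H; elim: s => [|a s IH].
  under eq_fun do rewrite big_nil. exact: cst_continuous.
under eq_fun do rewrite big_cons.
by move=> x; apply: continuousD; [apply: H| apply: IH].
Qed.

Lemma contM (T : topologicalType) (f g : T -> R) :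
  continuous f -> continuous g -> continuous (fun x => f x * g x).
Proof. by move=> cf cg x; exact: (@continuousM R T f g x (cf x) (cg x)). Qed.

Definition qA n (A : tensor3 R n) (y : 'I_n -> R) :=
  \sum_(i < n) (\sum_(j < n) \sum_(k < n) A i j k * y j * y k) ^+ 2.

Lemma qA_cont n (A : tensor3 R n) :
  continuous (fun v : 'rV[R]_n => qA A (fun i => v ord0 i)).
Proof.
rewrite /qA; apply: cont_sum => i.
under eq_fun do rewrite expr2; apply: contM; apply: cont_sum => j;
  apply: cont_sum => k; apply: contM; try apply: contM.
all: try (by move=> ?; apply: cvg_cst).
all: try (by apply: coord_continuous).
all: try apply: contM.
all: try (by move=> ?; apply: cvg_cst).
all: try (by apply: coord_continuous).
all: exact: cst_continuous.
Qed.

Lemma sphere_max n (F : ('I_n -> R) -> R) :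
  continuous (fun v : 'rV[R]_n => F (fun i => v ord0 i)) -> (0 < n)%N ->
  exists y, unit_vec y /\ forall z, unit_vec z -> F z <= F y.
Proof.
move=> cF n0.
pose S := [set v : 'rV[R]_n | \sum_(i < n) v ord0 i ^+ 2 = 1].
have S0 : S !=set0.
  exists (\row_i ((i == Ordinal n0)%:R : R)); rewrite /S /=.
  rewrite (bigD1 (Ordinal n0)) //= big1 ?mxE ?eqxx ?addr0 ?expr1n //.
  by move=> i /negbTE; rewrite mxE => ->; rewrite expr0n.
have cS : compact S.
  apply: bounded_closed_compact.
    exists 1; split; first by rewrite num_real.
    move=> M M1 v Sv.
    rewrite /= [X in X <= _]/Num.norm /= mx_normrE.
    apply: bigmax_le => [|[a b] _ /=]; first by apply: ltW; apply: lt_trans M1.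
    rewrite (ord1 a).
    have h : v ord0 b ^+ 2 <= 1.
      rewrite -Sv (bigD1 b) //= lerDl; apply: sumr_ge0 => ? _; exact: sqr_ge0.
    apply: le_trans (ltW M1); rewrite ler_norml; apply/andP; split; nra.
  have -> : S = (fun v : 'rV[R]_n => \sum_(i < n) v ord0 i ^+ 2) @^-1` [set 1].
    by [].
  apply: closed_comp; last exact: closed_eq.
  move=> v _; move: v; apply: cont_sum => i; under eq_fun do rewrite expr2;
    apply: contM; exact: coord_continuous.
have [c Sc Hc] := EVT_max_rV S0 cS (continuous_subspaceT cF).
exists (fun i => c ord0 i); split.
  by move: Sc; rewrite inE.
move=> z zu.
have := Hc (\row_i z i); rewrite inE.
have -> : (fun i => (\row_i z i) ord0 i) = z by apply/funext => i; rewrite mxE.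
apply; rewrite /S /=; under eq_bigr do rewrite mxE; exact: zu.
Qed.


Lemma poly4_ge0 (c1 c2 c3 c4 : R) :
  (forall t, 0 <= c1 * t + c2 * t ^+ 2 + c3 * t ^+ 3 + c4 * t ^+ 4) -> 0 <= c1.
Proof.
move=> H; rewrite leNgt; apply/negP => c1lt0.
pose K := `|c2| + `|c3| + `|c4|.
have K0 : 0 <= K by rewrite /K !addr_ge0.
have key : forall t : R, 0 < t -> t <= 1 -> - c1 <= t * K.
  move=> t t0 t1; have := H t.
  have -> : c1 * t + c2 * t ^+ 2 + c3 * t ^+ 3 + c4 * t ^+ 4
     = t * (c1 + c2 * t + c3 * t ^+ 2 + c4 * t ^+ 3) by ring.
  rewrite pmulr_rge0 // => h.
  have h2 : - `|c2| <= c2 by rewrite lerNnormlW.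
  have h3 : - `|c3| <= c3 by rewrite lerNnormlW.
  have h4 : - `|c4| <= c4 by rewrite lerNnormlW.
  have e2 : c2 * t <= `|c2| * t by rewrite ler_pM2r // ler_norm.
  have e3 : c3 * t ^+ 2 <= `|c3| * t.
    apply: le_trans (_ : `|c3| * t ^+ 2 <= _).
      by rewrite ler_pM2r ?exprn_gt0 // ler_norm.
    by rewrite ler_wpM2l // expr2 ger_pMl.
  have e4 : c4 * t ^+ 3 <= `|c4| * t.
    apply: le_trans (_ : `|c4| * t ^+ 3 <= _).
      by rewrite ler_pM2r ?exprn_gt0 // ler_norm.
    rewrite ler_wpM2l // -[X in _ <= X]expr1 ler_wiXn2l //. exact: ltW.
  have hh : - c1 <= `|c2| * t + `|c3| * t + `|c4| * t by lra.
  rewrite /K; lra.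
pose tt := (- c1) / (- c1 + K + 1).
have d0 : 0 < - c1 + K + 1 by lra.
have u0 : 0 < tt by rewrite /tt divr_gt0 // oppr_gt0.
have u1 : tt <= 1 by rewrite /tt ler_pdivrMr // mul1r; lra.
have := key tt u0 u1.
rewrite /tt mulrAC ler_pdivlMr // => h.
nra.
Qed.

Lemma poly4_eq0 (c1 c2 c3 c4 : R) :
  (forall t, 0 <= c1 * t + c2 * t ^+ 2 + c3 * t ^+ 3 + c4 * t ^+ 4) -> c1 = 0.
Proof.
move=> H; apply/eqP; rewrite eq_le; apply/andP; split; last exact: poly4_ge0 H.
rewrite -oppr_ge0; apply: (@poly4_ge0 _ c2 (- c3) c4) => t.
have := H (- t); congr (0 <= _); ring.
Qed.

Definition Ay n (A : tensor3 R n) (y : 'I_n -> R) i :=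
  \sum_(j < n) \sum_(k < n) A i j k * y j * y k.
Definition GA n (A : tensor3 R n) (y : 'I_n -> R) m :=
  \sum_(i < n) Ay A y i * \sum_(k < n) A i m k * y k.
Definition nrm n (y : 'I_n -> R) := \sum_(i < n) y i ^+ 2.
Definition ym n (y : 'I_n -> R) (m : 'I_n) (t : R) :=
  fun j => y j + t * (j == m)%:R.

Lemma sum_delta n (F : 'I_n -> R) m : \sum_(j < n) F j * (j == m)%:R = F m.
Proof.
rewrite (bigD1 m) //= eqxx mulr1 big1 ?addr0 // => j /negbTE ->; by rewrite mulr0.
Qed.

Lemma Ay_shift n (A : tensor3 R n) y m t i :
  Ay A (ym y m t) i = Ay A y i
    + t * (\sum_(k < n) A i m k * y k + \sum_(j < n) y j * A i j m)
    + t ^+ 2 * A i m m.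
Proof.
transitivity (Ay A y i
   + t * (\sum_(j < n) (\sum_(k < n) A i j k * y k) * (j == m)%:R
          + \sum_(j < n) y j * (\sum_(k < n) A i j k * (k == m)%:R))
   + t ^+ 2 * \sum_(j < n) (\sum_(k < n) A i j k * (k == m)%:R) * (j == m)%:R).
  rewrite /Ay /ym mulrDr !mulr_sumr -!big_split; apply: eq_bigr => j _ /=.
  rewrite !mulr_suml !mulr_sumr -!big_split; apply: eq_bigr => k _ /=.
  ring.
rewrite sum_delta; congr (_ + _ * (_ + _) + _).
  by apply: eq_bigr => j _; rewrite sum_delta.
by under eq_bigr do rewrite sum_delta; rewrite sum_delta.
Qed.

Lemma nrm_shift n (y : 'I_n -> R) m t :
  nrm (ym y m t) = nrm y + t * (2 * y m) + t ^+ 2.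
Proof.
transitivity (nrm y + t * (2 * \sum_(j < n) y j * (j == m)%:R)
   + t ^+ 2 * \sum_(j < n) (j == m)%:R * (j == m)%:R).
  rewrite /nrm /ym !mulr_sumr -!big_split; apply: eq_bigr => j _ /=; ring.
rewrite sum_delta (eq_bigr (fun j => (j == m)%:R * (j == m)%:R)) //.
by rewrite sum_delta eqxx mulr1.
Qed.

Lemma qA_shift n (A : tensor3 R n) y m :
  piezo_type A ->
  exists a2 a3 a4, forall t,
    qA A (ym y m t) = qA A y + t * (4 * GA A y m) + t ^+ 2 * a2 + t ^+ 3 * a3
       + t ^+ 4 * a4.
Proof.
move=> pA.
pose h i := \sum_(k < n) A i m k * y k.
have hh : forall i, \sum_(j < n) y j * A i j m = h i.
  by move=> i; apply: eq_bigr => j _; rewrite pA mulrC.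
exists (\sum_(i < n) (4 * h i ^+ 2 + 2 * Ay A y i * A i m m)),
       (\sum_(i < n) 4 * h i * A i m m), (\sum_(i < n) A i m m ^+ 2) => t.
rewrite /qA /GA !mulr_sumr -!big_split; apply: eq_bigr => i _ /=.
rewrite -/(Ay A _ i) Ay_shift hh -/(h i) -/(Ay A y i).
ring.
Qed.

Lemma qA_scale n (A : tensor3 R n) c z :
  qA A (fun i => c * z i) = c ^+ 4 * qA A z.
Proof.
rewrite /qA mulr_sumr; apply: eq_bigr => i _.
have -> : \sum_(j < n) \sum_(k < n) A i j k * (c * z j) * (c * z k)
   = c ^+ 2 * \sum_(j < n) \sum_(k < n) A i j k * z j * z k.
  rewrite mulr_sumr; apply: eq_bigr => j _; rewrite mulr_sumr; apply: eq_bigr => k _.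
  ring.
ring.
Qed.

Lemma nrm_ge0 n (z : 'I_n -> R) : 0 <= nrm z.
Proof. by apply: sumr_ge0 => i _; exact: sqr_ge0. Qed.

Lemma nrm_eq0 n (z : 'I_n -> R) : nrm z = 0 -> forall i, z i = 0.
Proof.
move=> /eqP; rewrite /nrm psumr_eq0; last by move=> i _; exact: sqr_ge0.
move=> /allP H i; apply/eqP; rewrite -sqrf_eq0; apply: H; exact: mem_index_enum.
Qed.

Lemma qA_zero n (A : tensor3 R n) z : (forall i, z i = 0) -> qA A z = 0.
Proof.
move=> z0; rewrite /qA big1 // => i _; rewrite big1 ?expr0n // => j _.
by rewrite big1 // => k _; rewrite !z0 !mulr0.
Qed.

Lemma max_hom n (P Q : tensor3 R n) l :
  (forall z, unit_vec z -> qA P z - qA Q z <= l) ->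
  forall z, qA P z - qA Q z <= l * nrm z ^+ 2.
Proof.
move=> H z.
have [s0|s0] := eqVneq (nrm z) 0.
  by rewrite s0 !qA_zero ?subrr ?expr0n ?mulr0 //; exact: nrm_eq0.
have sp : 0 < nrm z by rewrite lt_def s0 nrm_ge0.
pose c := (Num.sqrt (nrm z))^-1.
have c2 : c ^+ 2 = (nrm z)^-1 by rewrite /c exprVn sqr_sqrtr // ltW.
have u : unit_vec (fun i => c * z i).
  rewrite /unit_vec; under eq_bigr do rewrite exprMn.
  by rewrite -mulr_sumr c2 mulVf.
have := H _ u; rewrite !qA_scale -mulrBr.
have -> : c ^+ 4 = (nrm z ^+ 2)^-1 by rewrite (_ : 4 = 2 * 2)%N // exprM c2 exprVn.
rewrite mulrC -ler_pdivlMr; last by rewrite invr_gt0 exprn_gt0.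
by rewrite invrK.
Qed.

Lemma lagrange n (P Q : tensor3 R n) y l :
  piezo_type P -> piezo_type Q -> unit_vec y ->
  (forall z, unit_vec z -> qA P z - qA Q z <= l) ->
  qA P y - qA Q y = l ->
  forall m, GA P y m - GA Q y m = l * y m.
Proof.
move=> pP pQ uy H Hy m.
have [p2 [p3 [p4 HP]]] := qA_shift y m pP.
have [q2 [q3 [q4 HQ]]] := qA_shift y m pQ.
have ny : nrm y = 1 by [].
suff : 4 * l * y m - 4 * (GA P y m - GA Q y m) = 0 by lra.
apply: (@poly4_eq0 _ (l * (4 * y m ^+ 2 + 2) - (p2 - q2)) (4 * l * y m - (p3 - q3))
          (l - (p4 - q4))) => t.
have := max_hom H (ym y m t).
rewrite nrm_shift HP HQ ny -Hy => h.
rewrite Hy in h.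
set LHS := (X in 0 <= X).
have -> : LHS = l * (1 + t * (2 * y m) + t ^+ 2) ^+ 2 -
   (qA P y + t * (4 * GA P y m) + t ^+ 2 * p2 + t ^+ 3 * p3 + t ^+ 4 * p4 -
   (qA Q y + t * (4 * GA Q y m) + t ^+ 2 * q2 + t ^+ 3 * q3 + t ^+ 4 * q4)).
  rewrite /LHS -Hy; ring.
by rewrite subr_ge0.
Qed.

Lemma contB (T : topologicalType) (f g : T -> R) :
  continuous f -> continuous g -> continuous (fun x => f x - g x).
Proof.
move=> cf cg x; apply: (@continuousB R R^o); [exact: cf | exact: cg].
Qed.

Definition zero3 n : tensor3 R n := fun _ _ _ => 0.

Lemma qA_zero3 n (z : 'I_n -> R) : qA (@zero3 n) z = 0.
Proof.
rewrite /qA big1 // => i _; rewrite big1 ?expr0n // => j _.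
by rewrite big1 // => k _; rewrite /zero3 !mul0r.
Qed.

Lemma GA_zero3 n (z : 'I_n -> R) m : GA (@zero3 n) z m = 0.
Proof.
rewrite /GA big1 // => i _; rewrite big1 ?mulr0 // => k _; by rewrite /zero3 mul0r.
Qed.

Lemma piezo_zero3 n : piezo_type (@zero3 n).
Proof. by []. Qed.

Lemma GA_canon n (A : tensor3 R n) y m :
  GA A y m = \sum_(i < n) \sum_(p < n) \sum_(j < n) \sum_(k < n)
     A i m p * A i j k * y p * y j * y k.
Proof.
rewrite /GA /Ay; apply: eq_bigr => i _; rewrite mulrC mulr_suml.
apply: eq_bigr => p _; rewrite mulr_sumr; apply: eq_bigr => j _.
rewrite mulr_sumr; apply: eq_bigr => k _; ring.
Qed.

Lemma pull_i n (F : 'I_n -> 'I_n -> 'I_n -> 'I_n -> R) :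
  \sum_(b < n) \sum_(c < n) \sum_(d < n) \sum_(i < n) F i b c d =
  \sum_(i < n) \sum_(b < n) \sum_(c < n) \sum_(d < n) F i b c d.
Proof.
under eq_bigr => b _ do under eq_bigr => c _ do rewrite exchange_big.
under eq_bigr => b _ do rewrite exchange_big.
by rewrite exchange_big.
Qed.

Lemma S_contr n (A : tensor3 R n) y m :
  \sum_(b < n) \sum_(c < n) \sum_(d < n) S_of A m b c d * y b * y c * y d
  = GA A y m.
Proof.
transitivity (3^-1 * (
   \sum_(b < n) \sum_(c < n) \sum_(d < n) \sum_(i < n) A i m b * A i c d * y b * y c * y d
 + \sum_(b < n) \sum_(c < n) \sum_(d < n) \sum_(i < n) A i m c * A i b d * y b * y c * y d
 + \sum_(b < n) \sum_(c < n) \sum_(d < n) \sum_(i < n) A i m d * A i b c * y b * y c * y d)).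
  rewrite !mulrDr !mulr_sumr -!big_split; apply: eq_bigr => b _ /=.
  rewrite !mulr_sumr -!big_split; apply: eq_bigr => c _ /=.
  rewrite !mulr_sumr -!big_split; apply: eq_bigr => d _ /=.
  rewrite /S_of /B_of -!mulr_suml.
  set s1 := \sum_(i < n) A i m b * A i c d.
  set s2 := \sum_(i < n) A i m c * A i b d.
  set s3 := \sum_(i < n) A i m d * A i b c.
  set q := 3^-1; ring.
rewrite (pull_i (fun i b c d => A i m b * A i c d * y b * y c * y d)).
rewrite (pull_i (fun i b c d => A i m c * A i b d * y b * y c * y d)).
rewrite (pull_i (fun i b c d => A i m d * A i b c * y b * y c * y d)).
have -> : \sum_(i < n) \sum_(b < n) \sum_(c < n) \sum_(d < n)
    A i m c * A i b d * y b * y c * y d = GA A y m.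
  rewrite GA_canon; apply: eq_bigr => i _; rewrite exchange_big.
  apply: eq_bigr => p _; apply: eq_bigr => j _; apply: eq_bigr => k _; ring.
have -> : \sum_(i < n) \sum_(b < n) \sum_(c < n) \sum_(d < n)
    A i m d * A i b c * y b * y c * y d = GA A y m.
  rewrite GA_canon; apply: eq_bigr => i _.
  under eq_bigr => b _ do rewrite exchange_big.
  rewrite exchange_big.
  apply: eq_bigr => p _; apply: eq_bigr => j _; apply: eq_bigr => k _; ring.
have -> : \sum_(i < n) \sum_(b < n) \sum_(c < n) \sum_(d < n)
    A i m b * A i c d * y b * y c * y d = GA A y m by rewrite GA_canon.
have h3 : (3 : R) != 0 by rewrite pnatr_eq0.
set G := GA A y m.
have -> : G + G + G = 3 * G by ring.
by rewrite mulrA mulVf // mul1r.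
Qed.

Lemma T_contr n (A E : tensor3 R n) y m :
  \sum_(b < n) \sum_(c < n) \sum_(d < n)
     sub4 (S_of (add3 A E)) (S_of A) m b c d * y b * y c * y d
  = GA (add3 A E) y m - GA A y m.
Proof.
rewrite -!S_contr -sumrB; apply: eq_bigr => b _; rewrite -sumrB.
apply: eq_bigr => c _; rewrite -sumrB; apply: eq_bigr => d _; rewrite /sub4; ring.
Qed.

Lemma unit_n0 n (y : 'I_n -> R) : unit_vec y -> (0 < n)%N.
Proof.
case: n y => // y; rewrite /unit_vec big_ord0 => /eqP; by rewrite eq_sym oner_eq0.
Qed.

Lemma Ceig_neg n (A : tensor3 R n) l : C_eigenvalue A l -> C_eigenvalue A (- l).
Proof.
move=> [x [y [ux [uy [h1 h2]]]]].
exists (fun i => - x i), y; split; [|split; [by []|split]].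
- by rewrite /unit_vec; under eq_bigr do rewrite sqrrN.
- by move=> i; rewrite h1 mulrNN.
- move=> i; rewrite mulNr -h2 -sumrN; apply: eq_bigr => j _.
  rewrite -sumrN; apply: eq_bigr => k _; ring.
Qed.

Lemma Cmax_ge0 n (A : tensor3 R n) l : is_lambda_Cmax A l -> 0 <= l.
Proof.
move=> [h1 h2]; have := h2 _ (Ceig_neg h1); lra.
Qed.

Lemma Ceig_q n (A : tensor3 R n) l :
  C_eigenvalue A l -> exists y, unit_vec y /\ qA A y = l ^+ 2.
Proof.
move=> [x [y [ux [uy [h1 h2]]]]]; exists y; split => //.
rewrite /qA; under eq_bigr do rewrite h1 exprMn.
by rewrite -mulr_sumr ux mulr1.
Qed.

Lemma Cmax_bound n (A : tensor3 R n) lA :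
  piezo_type A -> is_lambda_Cmax A lA ->
  forall z, unit_vec z -> qA A z <= lA ^+ 2.
Proof.
move=> pA [hC hmax].
have lA0 : 0 <= lA by apply: (@Cmax_ge0 _ A).
have n0 : (0 < n)%N by case: hC => x [y [ux _]]; exact: unit_n0 ux.
have [y [uy ymax]] := sphere_max (qA_cont (A := A)) n0.
set nu := qA A y.
have H : forall z, unit_vec z -> qA A z - qA (@zero3 n) z <= nu.
  by move=> z uz; rewrite qA_zero3 subr0; apply: ymax.
have Ly : qA A y - qA (@zero3 n) y = nu by rewrite qA_zero3 subr0.
have L := lagrange pA (@piezo_zero3 n) uy H Ly.
have nu0 : 0 <= nu by apply: sumr_ge0 => i _; exact: sqr_ge0.
suff : nu <= lA ^+ 2 by move=> h z /ymax; move/le_trans; apply.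
have [nuz|nuz] := eqVneq nu 0.
  by rewrite nuz sqr_ge0.
have nup : 0 < nu by rewrite lt_def nuz nu0.
pose mu := Num.sqrt nu.
have mup : 0 < mu by rewrite sqrtr_gt0.
have mu2 : mu ^+ 2 = nu by rewrite sqr_sqrtr.
have muC : C_eigenvalue A mu.
  exists (fun i => Ay A y i / mu), y; split; [|split; [by []|split]].
  - rewrite /unit_vec; under eq_bigr do rewrite expr_div_n.
    by rewrite -mulr_suml -/(qA A y) -/nu mu2 mulfV.
  - by move=> i; rewrite mulrC divfK ?gt_eqF.
  - move=> i.
    transitivity (mu^-1 * GA A y i).
      rewrite /GA mulr_sumr; apply: eq_bigr => j _.
      rewrite !mulr_sumr; apply: eq_bigr => k _; rewrite -pA; ring.
    have := L i; rewrite GA_zero3 subr0 => ->.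
    rewrite -mu2; field; by rewrite gt_eqF.
have := hmax _ muC => h.
rewrite -mu2; have := ltW mup; nra.
Qed.

Lemma Zmax_bound n (A E : tensor3 R n) zmax :
  piezo_type A -> piezo_type (add3 A E) -> (0 < n)%N ->
  is_lambda_Zmax (sub4 (S_of (add3 A E)) (S_of A)) zmax ->
  forall z, unit_vec z -> qA (add3 A E) z - qA A z <= zmax.
Proof.
move=> pA pAt n0 [_ hmax].
have [y [uy ymax]] := @sphere_max n (fun z => qA (add3 A E) z - qA A z)
  (contB (qA_cont (A := add3 A E)) (qA_cont (A := A))) n0.
set l := qA (add3 A E) y - qA A y.
have L := lagrange pAt pA uy ymax (erefl l).
suff : l <= zmax by move=> h z /ymax; move/le_trans; apply.
apply: hmax; exists y; split => // i.
by rewrite T_contr L.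
Qed.

Lemma Zmin_bound n (A E : tensor3 R n) zmin :
  piezo_type A -> piezo_type (add3 A E) -> (0 < n)%N ->
  is_lambda_Zmin (sub4 (S_of (add3 A E)) (S_of A)) zmin ->
  forall z, unit_vec z -> zmin <= qA (add3 A E) z - qA A z.
Proof.
move=> pA pAt n0 [_ hmin].
have [y [uy ymax]] := @sphere_max n (fun z => qA A z - qA (add3 A E) z)
  (contB (qA_cont (A := A)) (qA_cont (A := add3 A E))) n0.
set l := qA A y - qA (add3 A E) y.
have L := lagrange pA pAt uy ymax (erefl l).
suff : zmin <= - l by move=> h z /ymax /= hz; rewrite -/l in hz; lra.
apply: hmin; exists y; split => // i.
rewrite T_contr mulNr -L; ring.
Qed.

Lemma qA_GA n (A : tensor3 R n) x : qA A x = \sum_(m < n) x m * GA A x m.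
Proof.
rewrite /qA [RHS](eq_bigr (fun m => \sum_(i < n) x m * (Ay A x i * \sum_(k < n) A i m k * x k))); last first.
  by move=> m _; rewrite /GA mulr_sumr.
rewrite exchange_big; apply: eq_bigr => i _ /=.
rewrite -/(Ay A x i) expr2 [X in _ * X]/Ay mulr_sumr; apply: eq_bigr => j _.
rewrite !mulr_sumr; apply: eq_bigr => k _; ring.
Qed.

Lemma Zeig_val n (A E : tensor3 R n) l :
  Z_eigenvalue (sub4 (S_of (add3 A E)) (S_of A)) l ->
  exists x, unit_vec x /\ qA (add3 A E) x - qA A x = l.
Proof.
move=> [x [ux hx]]; exists x; split => //.
rewrite !qA_GA -sumrB.
transitivity (\sum_(m < n) x m * (l * x m)).
  by apply: eq_bigr => m _; rewrite -hx T_contr mulrBr.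
transitivity (l * \sum_(m < n) x m ^+ 2).
  by rewrite mulr_sumr; apply: eq_bigr => m _; ring.
by rewrite ux mulr1.
Qed.
End S.

Theorem theorem2p2 (R : realType) (n : nat) (A E : tensor3 R n)
  (lA lAt zmin zmax : R) :
  piezo_type A -> piezo_type (add3 A E) ->
  is_lambda_Cmax A lA -> is_lambda_Cmax (add3 A E) lAt ->
  is_lambda_Zmin (sub4 (S_of (add3 A E)) (S_of A)) zmin ->
  is_lambda_Zmax (sub4 (S_of (add3 A E)) (S_of A)) zmax ->
  [/\ 0 <= lA ^+ 2 + zmin, 0 <= lA ^+ 2 + zmax,
      Num.sqrt (lA ^+ 2 + zmin) <= lAt
    & lAt <= Num.sqrt (lA ^+ 2 + zmax)].
Proof.
move=> pA pAt CA CAt Zmin Zmax.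
have lA0 := Cmax_ge0 CA.
have lAt0 := Cmax_ge0 CAt.
have [y [uy qy]] := Ceig_q CA.1.
have [yt [uyt qyt]] := Ceig_q CAt.1.
have n0 := unit_n0 uy.
have BA := Cmax_bound pA CA.
have BAt := Cmax_bound pAt CAt.
have Zmx := Zmax_bound pA pAt n0 Zmax.
have Zmn := Zmin_bound pA pAt n0 Zmin.
have up : lAt ^+ 2 <= lA ^+ 2 + zmax.
  have := BA _ uyt; have := Zmx _ uyt; lra.
have lo : lA ^+ 2 + zmin <= lAt ^+ 2.
  have := BAt _ uy; have := Zmn _ uy; lra.
have h1 : 0 <= lA ^+ 2 + zmin.
  have [x [ux hx]] := Zeig_val Zmin.1.
  have := BA _ ux; have : 0 <= qA (add3 A E) x.
    by apply: sumr_ge0 => i _; exact: sqr_ge0.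
  lra.
have h2 : 0 <= lA ^+ 2 + zmax by have := sqr_ge0 lAt; lra.
split => //.
- by rewrite -[leRHS](ger0_norm lAt0) -sqrtr_sqr; apply: ler_wsqrtr.
- by rewrite -[leLHS](ger0_norm lAt0) -sqrtr_sqr; apply: ler_wsqrtr.
Qed.
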